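(* For $w>0$, the graphic generating function of directed acyclic graphs satisfies, as an identity of formal power series in $z$, \[u\,\partial_u \mathrm{DAG}(z,w,u)=u z\,\mathrm{DAG}\!\left(\frac{z}{1+w},w,u\right)\mathrm{DAG}\!\left(z,w,\frac{w}{1+w}\right).\]
   Context: For a labelled DAG $G$ (directed acyclic graph on vertex set $\{1,\dots,n\}$, $n\ge0$), $v(G)$, $e(G)$, $s(G)$ denote its numbers of vertices, edges, and sources (vertices of in-degree $0$). $\mathrm{DAG}(z,w,u)=\sum_G \frac{z^{v(G)}w^{e(G)}u^{s(G)}}{(1+w)^{\binom{v(G)}{2}}v(G)!}$, the sum over all labelled DAGs. (It is known that $\mathrm{DAG}(z,w,u)=\mathrm{Set}((u-1)z,w)/\mathrm{Set}(-z,w)$ with $\mathrm{Set}(z,w)=\sum_{n\ge0}\frac{z^n}{(1+w)^{\binom n2}n!}$.) *)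

(* Defs.v *)
From mathcomp Require Import all_boot all_order all_algebra.
Set Implicit Arguments. Unset Strict Implicit. Unset Printing Implicit Defensive.
Import Order.TTheory GRing.Theory Num.Theory.
Local Open Scope ring_scope.

(* A labelled digraph on {0,..,n-1} is its edge set E; (x,y) \in E is an
   edge x -> y. *)
Definition edge_rel n (E : {set 'I_n * 'I_n}) : rel 'I_n :=
  fun x y => (x, y) \in E.

Definition is_dag n (E : {set 'I_n * 'I_n}) : bool :=
  [forall x, forall y, ((x, y) \in E) ==> ~~ connect (edge_rel E) y x].

Definition nsources n (E : {set 'I_n * 'I_n}) : nat :=
  #|[set v : 'I_n | [forall x, (x, v) \notin E]]|.

(* Formal power series in z with coefficients polynomials in u over R. *)
Definition series (R : nzRingType) := nat -> {poly R}.

(* Coefficient of z^n in DAG(z,w,u), as a polynomial in u: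
   sum over DAGs G on n vertices of w^e(G) u^s(G) / ((1+w)^C(n,2) n!). *)
Definition DAGcoef (R : fieldType) (w : R) (n : nat) : {poly R} :=
  ((1 + w) ^+ 'C(n, 2) * (n`!)%:R)^-1 *:
    \sum_(E : {set 'I_n * 'I_n} | is_dag E) (w ^+ #|E|) *: 'X^(nsources E).

Definition DAG (R : fieldType) (w : R) : series R := fun n => DAGcoef w n.

Definition DAG_zscale (R : fieldType) (w c : R) : series R :=
  fun n => (c ^+ n) *: DAGcoef w n.

Definition DAG_ueval (R : fieldType) (w a : R) : series R :=
  fun n => ((DAGcoef w n).[a])%:P.

Definition u_du (R : nzRingType) (F : series R) : series R :=
  fun n => 'X * (F n)^`().

Definition smul (R : nzRingType) (F G : series R) : series R :=
  fun n => \sum_(i < n.+1) F i * G (n - i)%N.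

Definition uz_mul (R : nzRingType) (F : series R) : series R :=
  fun n => if n is m.+1 then 'X * F m else 0.

(* Main.v *)
Require Import Defs.
From mathcomp Require Import all_boot all_order all_algebra zify ring.
From Stdlib Require Import FunctionalExtensionality.
Import Order.TTheory GRing.Theory Num.Theory.
Set Implicit Arguments. Unset Strict Implicit. Unset Printing Implicit Defensive.

Section Comb.
Variables (n : nat) (v : 'I_n.+1).

Definition hE (E' : {set 'I_n * 'I_n}) (S : {set 'I_n}) : {set 'I_n.+1 * 'I_n.+1} :=
  [set p | if unlift v p.2 is Some y then
             (if unlift v p.1 is Some x then (x, y) \in E' else y \in S)
           else false].
Definition restr (E : {set 'I_n.+1 * 'I_n.+1}) : {set 'I_n * 'I_n} :=
  [set p | (lift v p.1, lift v p.2) \in E].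
Definition outS (E : {set 'I_n.+1 * 'I_n.+1}) : {set 'I_n} :=
  [set y | (v, lift v y) \in E].
Definition is_src (E : {set 'I_n.+1 * 'I_n.+1}) := [forall x, (x, v) \notin E].

Section Inner.
Variables (E' : {set 'I_n * 'I_n}) (S : {set 'I_n}).

Lemma hE_ll x y : ((lift v x, lift v y) \in hE E' S) = ((x, y) \in E').
Proof. by rewrite inE /= !liftK. Qed.
Lemma hE_vl y : ((v, lift v y) \in hE E' S) = (y \in S).
Proof. by rewrite inE /= liftK unlift_none. Qed.
Lemma hE_v a : ((a, v) \in hE E' S) = false.
Proof. by rewrite inE /= unlift_none. Qed.

Lemma restr_hE : restr (hE E' S) = E'.
Proof. by apply/setP => [[x y]]; rewrite inE hE_ll. Qed.
Lemma outS_hE : outS (hE E' S) = S.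
Proof. by apply/setP => y; rewrite inE hE_vl. Qed.
Lemma src_hE : is_src (hE E' S).
Proof. by apply/forallP => x; rewrite hE_v. Qed.

Lemma connect_hE_v a : connect (edge_rel (hE E' S)) a v -> a = v.
Proof.
case/connectP => p; case/lastP: p => [|p b] /=; first by move=> _ ->.
rewrite rcons_path last_rcons => /andP[_ ebv] bv; move: ebv.
by rewrite -bv /edge_rel hE_v.
Qed.

Lemma connect_hE_ll x y :
  connect (edge_rel (hE E' S)) (lift v x) (lift v y) = connect (edge_rel E') x y.
Proof.
apply/idP/idP.
  case/connectP => p; elim: p x => [|b p IH] x /=.
    by move=> _ /lift_inj ->; apply: connect0.
  case/andP => eb pb; case: (unliftP v b) eb pb => [x' ->|->]; last first.
    by rewrite /edge_rel hE_v.
  rewrite /edge_rel hE_ll => exx' pb ly.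
  apply: connect_trans (connect1 exx') _; exact: IH pb ly.
case/connectP => p pp ->.
apply/connectP; exists (map (lift v) p); last by rewrite last_map.
by apply: homo_path pp => a b; rewrite /edge_rel hE_ll.
Qed.

Lemma dag_hE : is_dag (hE E' S) = is_dag E'.
Proof.
apply/forallP/forallP.
  move=> H x; apply/forallP => y; apply/implyP => exy.
  move/forallP: (H (lift v x)) => /(_ (lift v y)) /implyP.
  by rewrite hE_ll connect_hE_ll; apply.
move=> H a; apply/forallP => b; apply/implyP.
case: (unliftP v b) => [y ->|->]; last by rewrite hE_v.
case: (unliftP v a) => [x ->|->].
  rewrite hE_ll connect_hE_ll => exy.
  by move/forallP: (H x) => /(_ y) /implyP; apply.
move=> _; apply/negP => /connect_hE_v /eqP; by rewrite eq_sym (negbTE (neq_lift _ _)).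
Qed.


End Inner.

Lemma hE_restr E : is_src E -> hE (restr E) (outS E) = E.
Proof.
move/forallP=> src; apply/setP => [[a b]].
case: (unliftP v b) => [y ->|->]; last by rewrite hE_v; apply/esym/negbTE.
case: (unliftP v a) => [x ->|->]; first by rewrite hE_ll inE.
by rewrite hE_vl inE.
Qed.

Section Inner2.
Variables (E' : {set 'I_n * 'I_n}) (S : {set 'I_n}).

Lemma card_sum (T : finType) (A : {set T}) : #|A| = \sum_t (t \in A : nat).
Proof. by rewrite -sum1_card big_mkcond; apply: eq_bigr => t _; case: (t \in A). Qed.

Lemma card_hE : #|hE E' S| = (#|E'| + #|S|)%N.
Proof.
rewrite !card_sum.
have pb (m : nat) (F : {set 'I_m * 'I_m}) : \sum_(t : 'I_m * 'I_m) (t \in F : nat) =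
    \sum_a \sum_b ((a, b) \in F : nat).
  by rewrite pair_bigA; apply: eq_bigr => [[]].
rewrite !pb.
rewrite (bigD1_ord v) //= (bigD1_ord v) //= hE_v add0n.
rewrite addnC; congr (_ + _)%N; last by apply: eq_bigr => y _; rewrite hE_vl.
apply: eq_bigr => x _; rewrite (bigD1_ord v) //= hE_v add0n.
by apply: eq_bigr => y _; rewrite hE_ll.
Qed.

Definition srcset m (E : {set 'I_m * 'I_m}) := [set y : 'I_m | [forall x, (x, y) \notin E]].

Lemma nsrc_hE : nsources (hE E' S) = (#|srcset E' :\: S|).+1.
Proof.
rewrite /nsources card_sum (bigD1_ord v) //= card_sum.
have -> : v \in [set y | [forall x, (x, y) \notin hE E' S]].
  by rewrite inE; apply/forallP => x; rewrite hE_v.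
rewrite add1n; congr _.+1; apply: eq_bigr => y _; congr nat_of_bool.
rewrite !inE; apply/forallP/andP.
  move=> H; split.
    by move: (H v); rewrite hE_vl.
  by apply/forallP => x; move: (H (lift v x)); rewrite hE_ll.
case=> yS /forallP H a; case: (unliftP v a) => [x ->|->].
  by rewrite hE_ll.
by rewrite hE_vl.
Qed.

End Inner2.
End Comb.
Lemma dag_source n (E : {set 'I_n.+1 * 'I_n.+1}) : is_dag E -> (0 < nsources E)%N.
Proof.
move=> /forallP dag.
pose anc x := [set y | connect (edge_rel E) y x].
have [x _ xmin] := @arg_minnP _ ord0 xpredT (fun x => #|anc x|) isT.
apply/card_gt0P; exists x; rewrite inE; apply/forallP => y.
apply/negP => yx.
have := xmin y isT; apply/negP; rewrite -ltnNge; apply: proper_card.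
apply/properP; split.
  apply/subsetP => z; rewrite !inE => zy.
  apply: connect_trans zy (connect1 _); exact: yx.
exists x; first by rewrite inE connect0.
rewrite inE; move: (dag y) => /forallP /(_ x) /implyP; exact.
Qed.

Local Open Scope ring_scope.

Lemma prod_if (R : comNzRingType) (T : finType) (P : pred T) (c : R) :
  \prod_t (if P t then c else 1) = c ^+ #|[set t | P t]|.
Proof.
rewrite -big_mkcond /= prodr_const; congr (_ ^+ _).
by apply: eq_card => t; rewrite !inE.
Qed.

Lemma subset_sum (R : comNzRingType) (T : finType) (A : {set T}) (a b : R) :
  \sum_(S : {set T}) b ^+ #|S| * a ^+ #|A :\: S| =
  (b + a) ^+ #|A| * (b + 1) ^+ #|~: A|.
Proof.
have -> : (b + a) ^+ #|A| * (b + 1) ^+ #|~: A| =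
    \prod_t \sum_(j : bool) (if j then b else if t \in A then a else 1).
  symmetry; rewrite (bigID (mem A)) /=.
  rewrite (eq_bigr (fun=> b + a)); last by move=> t tA; rewrite big_bool /= tA.
  rewrite [X in _ * X](eq_bigr (fun=> b + 1)); last by move=> t tA; rewrite big_bool /= (negbTE tA).
  rewrite !prodr_const; congr (_ * _ ^+ _).
  by apply: eq_card => t; rewrite !inE.
rewrite bigA_distr_bigA /=.
rewrite (reindex (fun f : {ffun T -> bool} => [set t | f t])); last first.
  exists (fun S : {set T} => [ffun t => t \in S]) => f _.
    by apply/ffunP => t; rewrite ffunE inE.
  by apply/setP => t; rewrite inE ffunE.
apply: eq_bigr => f _.
rewrite (eq_bigr (fun t => (if f t then b else 1) * (if (t \in A) && ~~ f t then a else 1))); last first.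
  by move=> t _; case: (f t); case: (t \in A); rewrite ?mulr1 ?mul1r.
rewrite big_split /= !prod_if; congr (_ ^+ _ * _ ^+ _).
apply: eq_card => t. rewrite !inE. by rewrite andbC.
Qed.

Section Poly.
Variables (R : realFieldType) (w : R).

Definition asum m : {poly R} :=
  \sum_(E : {set 'I_m * 'I_m} | is_dag E) w ^+ #|E| *: 'X^(nsources E).

Lemma deriv_asum n : (asum n.+1)^`() =
  \sum_(v < n.+1) \sum_(E | is_dag E && is_src v E) w ^+ #|E| *: 'X^((nsources E).-1).
Proof.
rewrite /asum raddf_sum /=.
rewrite (eq_bigr (fun E => \sum_(v in srcset E) w ^+ #|E| *: 'X^((nsources E).-1))); last first.
  by move=> E _; rewrite derivZ derivXn sumr_const scalerMnr.
symmetry; rewrite (exchange_big_dep (fun E => is_dag E)) /=; last by move=> v E _ /andP[].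
apply: eq_bigr => E dE; apply: eq_bigl => v.
by rewrite dE inE.
Qed.


Lemma per_v n (v : 'I_n.+1) :
  \sum_(E | is_dag E && is_src v E) w ^+ #|E| *: 'X^((nsources E).-1) =
  \sum_(E' : {set 'I_n * 'I_n} | is_dag E')
     w ^+ #|E'| *: (('X + w%:P) ^+ nsources E' * ((1 + w) ^+ (n - nsources E'))%:P).
Proof.
rewrite (reindex (fun j : {set 'I_n * 'I_n} * {set 'I_n} => hE v j.1 j.2)); last first.
  exists (fun E => (restr v E, outS v E)) => [[E' S]|E] /=.
    by rewrite restr_hE outS_hE.
  by rewrite inE => /andP[_ sE]; rewrite hE_restr.
rewrite /= (eq_bigl (fun j => is_dag j.1 && xpredT j.2)); last first.
  by move=> [E' S]; rewrite /= dag_hE src_hE.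
rewrite -(pair_big (fun E' => is_dag E') xpredT
   (fun E' S => w ^+ #|hE v E' S| *: 'X^((nsources (hE v E' S)).-1))) /=.
apply: eq_bigr => E' dE'.
under eq_bigr do rewrite card_hE nsrc_hE /= exprD -scalerA.
rewrite -scaler_sumr; congr (_ *: _).
under eq_bigr do rewrite -mul_polyC polyC_exp.
rewrite subset_sum addrC [w%:P + 1]addrC -polyC1 -polyCD -polyC_exp.
congr (_ * (_ ^+ _)%:P).
rewrite (_ : nsources E' = #|srcset E'|) //; have := cardsC (srcset E'); rewrite card_ord => h; rewrite -[X in (X - _)%N]h addKn; reflexivity.
Qed.

Definition phi : {poly R} := (1 + w)^-1 *: ('X + w%:P).

Lemma nsrc_le m (E : {set 'I_m * 'I_m}) : (nsources E <= m)%N.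
Proof. by rewrite /nsources -[X in (_ <= X)%N]card_ord max_card. Qed.

Lemma P1 n : 1 + w != 0 -> (DAGcoef w n.+1)^`() = DAGcoef w n \Po phi.
Proof.
move=> hw.
rewrite /DAGcoef derivZ -/(asum _) deriv_asum.
under eq_bigr do rewrite per_v.
rewrite sumr_const card_ord -scaler_nat scalerA comp_polyZ.
rewrite (raddf_sum (comp_poly phi)) /= !scaler_sumr; apply: eq_bigr => E dE.
rewrite comp_polyZ (rmorphXn (comp_poly phi)) /= comp_polyX /phi exprZn.
rewrite [_ * _%:P]mulrC mul_polyC !scalerA; congr (_ *: _).
have sle := nsrc_le E.
move: (nsources E) sle => s sle; move: #|E| => e; clear dE E.
rewrite -(subnK sle); move: (n - s)%N => k.
rewrite addnK binS bin1 factS natrM !exprD.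
have h1 : (1 + w) ^+ s != 0 by rewrite expf_neq0.
have h2 : (1 + w) ^+ k != 0 by rewrite expf_neq0.
have h3 : (1 + w) ^+ 'C(k + s, 2) != 0 by rewrite expf_neq0.
have h4 : ((k + s)`!)%:R != 0 :> R by rewrite pnatr_eq0 -lt0n fact_gt0.
have h5 : ((k + s).+1)%:R != 0 :> R by rewrite pnatr_eq0.
rewrite exprVn; field.
by rewrite h1 h2 h3 h4 -natrD addrC natr1 h5.
Qed.

Lemma D0 : DAGcoef w 0 = 1.
Proof.
have e0 (E : {set 'I_0 * 'I_0}) : E = set0 by apply/setP => [[[]]].
rewrite /DAGcoef (big_pred1 set0); last first.
  by move=> E; rewrite (e0 E) /= eqxx; apply/forallP => -[].
have -> : #|(set0 : {set 'I_0 * 'I_0})| = 0%N.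
  by apply/eqP; rewrite -leqn0; apply: (leq_trans (max_card _)); rewrite card_prod card_ord.
rewrite expr0 scale1r.
have -> : nsources (set0 : {set 'I_0 * 'I_0}) = 0%N.
  by apply/eqP; rewrite -leqn0; apply: leq_trans (max_card _) _; rewrite card_ord.
by rewrite expr0 mulr1 invr1 scale1r.
Qed.

Lemma Dat0 m : (DAGcoef w m.+1).[0] = 0.
Proof.
rewrite /DAGcoef hornerZ horner_sum big1 ?mulr0 // => E dE.
rewrite hornerZ hornerXn expr0n.
by case: eqP => [h|_]; [move: (dag_source dE); rewrite h | rewrite mulr0].
Qed.

Lemma poly_eq_deriv (p q : {poly R}) : p^`() = q^`() -> p.[0] = q.[0] -> p = q.
Proof.
move=> hd h0; apply/eqP; rewrite -subr_eq0; apply/eqP.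
have hd' : (p - q)^`() = 0 by rewrite derivB hd subrr.
have hc : forall i, (p - q)`_i.+1 = 0.
  move=> i; move/(congr1 (fun r : {poly R} => r`_i)): hd'.
  rewrite coef_deriv coef0 => /eqP; rewrite mulrn_eq0 /= => /eqP; exact.
rewrite [p - q]size1_polyC; last first.
  rewrite leqNgt; apply/negP => hs.
  have := hc (size (p - q)).-2.
  have -> : (size (p - q)%R).-2.+1 = (size (p - q)%R).-1 by case: (size _) hs => [|[|k]].
  move/eqP; rewrite -lead_coefE lead_coef_eq0 => /eqP hpq.
  by move: hs; rewrite hpq size_poly0.
have := horner_coef0 (p - q); rewrite hornerD hornerN h0 subrr => <-.
by rewrite polyC0.
Qed.

Definition cc : R := w / (1 + w).

Lemma P2 n : 1 + w != 0 -> DAGcoef w n \Po phi =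
  \sum_(i < n.+1) ((1 + w)^-1 ^+ i *: DAGcoef w i) * ((DAGcoef w (n - i)).[cc])%:P.
Proof.
move=> hw; elim: n => [|n IH].
  by rewrite big_ord1 D0 -polyC1 comp_polyC expr0 scale1r hornerC mul1r.
apply: poly_eq_deriv.
  rewrite deriv_comp P1 // IH (raddf_sum (comp_poly phi)) /= mulr_suml.
  rewrite raddf_sum /= [RHS]big_ord_recl /= D0 expr0 scale1r mul1r derivC add0r.
  apply: eq_bigr => j _.
  rewrite comp_polyM comp_polyZ comp_polyC derivM derivC mulr0 addr0.
  have -> : bump 0 j = j.+1 by [].
  rewrite (derivZ _ (DAGcoef w j.+1)) P1 //.
  rewrite /phi derivZ derivD derivX derivC addr0 subSS.
  rewrite -!mul_polyC exprS polyCM; ring.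
rewrite horner_comp horner_sum big_ord_recl /= big1 ?addr0.
  rewrite D0 expr0 scale1r mul1r hornerC subn0 /phi (hornerZ _ ('X + w%:P)) hornerD hornerX hornerC.
  by rewrite add0r /cc mulrC.
by move=> j _; rewrite hornerM hornerZ Dat0 mulr0 mul0r.
Qed.
End Poly.

Theorem theorem2 (R : realFieldType) (w : R) (hw : 0 < w) :
  u_du (DAG w) =
  uz_mul (smul (DAG_zscale w (1 + w)^-1) (DAG_ueval w (w / (1 + w)))).
Proof.
have hw1 : 1 + w != 0 by rewrite gt_eqF // ltr_wpDr // ltW.
apply: functional_extensionality => -[|m].
  by rewrite /u_du /DAG D0 -polyC1 derivC mulr0.
rewrite /u_du /DAG /uz_mul /smul P1 // P2 //.
Qed.
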